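(* Let $G$ be an orderable group and let $U\subseteq G$ be a finite set of pairwise commensurable elements. Then $\langle U\rangle$ is a cyclic subgroup of $G$.
   Context: A group is orderable if it has a linear order $\le$ such that $g\le h$ implies $xgy\le xhy$ for all $g,h,x,y$. Two elements $g,h$ are commensurable if $g^x=h^y$ for some $x,y\in\mathbb{Z}\setminus\{0\}$. *)

(* Defs.v *)
From Stdlib Require Import ZArith List.
Open Scope Z_scope.

Record is_group {G : Type} (mul : G -> G -> G) (one : G) (inv : G -> G) : Prop :=
  { grp_assoc : forall a b c, mul a (mul b c) = mul (mul a b) c;
    grp_mul1g : forall a, mul one a = a;
    grp_mulg1 : forall a, mul a one = a;
    grp_mulVg : forall a, mul (inv a) a = one;
    grp_mulgV : forall a, mul a (inv a) = one }.

Definition zpow {G : Type} (mul : G -> G -> G) (one : G) (inv : G -> G)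
    (g : G) (n : Z) : G :=
  match n with
  | Z0 => one
  | Zpos p => Pos.iter (mul g) one p
  | Zneg p => Pos.iter (mul (inv g)) one p
  end.

Definition orderable {G : Type} (mul : G -> G -> G) : Prop :=
  exists le : G -> G -> Prop,
    (forall a, le a a) /\
    (forall a b, le a b -> le b a -> a = b) /\
    (forall a b c, le a b -> le b c -> le a c) /\
    (forall a b, le a b \/ le b a) /\
    (forall g h x y, le g h -> le (mul x (mul g y)) (mul x (mul h y))).

Definition commensurable {G : Type} (mul : G -> G -> G) (one : G) (inv : G -> G)
    (g h : G) : Prop :=
  exists x y : Z, x <> 0 /\ y <> 0 /\ zpow mul one inv g x = zpow mul one inv h y.

Inductive generated {G : Type} (mul : G -> G -> G) (one : G) (inv : G -> G)
    (U : G -> Prop) : G -> Prop :=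
  | gen_base : forall u, U u -> generated mul one inv U u
  | gen_one : generated mul one inv U one
  | gen_mul : forall a b, generated mul one inv U a -> generated mul one inv U b ->
              generated mul one inv U (mul a b)
  | gen_inv : forall a, generated mul one inv U a -> generated mul one inv U (inv a).

Definition cyclic_subgroup {G : Type} (mul : G -> G -> G) (one : G) (inv : G -> G)
    (H : G -> Prop) : Prop :=
  exists c : G, forall z, H z <-> exists n : Z, z = zpow mul one inv c n.

(* Main.v *)
Require Import Defs.
From Stdlib Require Import ZArith List Lia.
Open Scope Z_scope.

Section Grp.
Variable G : Type.
Variable mul : G -> G -> G.
Variable one : G.
Variable inv : G -> G.
Hypothesis Hg : is_group mul one inv.

Notation "a * b" := (mul a b).
Notation zp := (zpow mul one inv).

Lemma assoc a b c : a * (b * c) = (a * b) * c. Proof. apply (grp_assoc _ _ _ Hg). Qed.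
Lemma m1g a : one * a = a. Proof. apply (grp_mul1g _ _ _ Hg). Qed.
Lemma mg1 a : a * one = a. Proof. apply (grp_mulg1 _ _ _ Hg). Qed.
Lemma mVg a : inv a * a = one. Proof. apply (grp_mulVg _ _ _ Hg). Qed.
Lemma mgV a : a * inv a = one. Proof. apply (grp_mulgV _ _ _ Hg). Qed.

Lemma cancel_r a b c : a * c = b * c -> a = b.
Proof. intro H. rewrite <- (mg1 a), <- (mg1 b), <- (mgV c), !assoc, H. reflexivity. Qed.
Lemma cancel_l a b c : c * a = c * b -> a = b.
Proof. intro H. rewrite <- (m1g a), <- (m1g b), <- (mVg c), <- !assoc, H. reflexivity. Qed.
Lemma inv_uniq a b : a * b = one -> b = inv a.
Proof. intro H. apply (cancel_l _ _ a). rewrite H, mgV. reflexivity. Qed.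
Lemma invK a : inv (inv a) = a.
Proof. symmetry. apply inv_uniq. apply mVg. Qed.
Lemma inv1 : inv one = one.
Proof. symmetry. apply inv_uniq. apply m1g. Qed.
Lemma invM a b : inv (a * b) = inv b * inv a.
Proof. symmetry. apply inv_uniq. rewrite assoc, <- (assoc a b), mgV, mg1, mgV. reflexivity. Qed.

Definition npow g (n : nat) := Nat.iter n (mul g) one.

Definition zq g (n : Z) := if Z_le_dec 0 n then npow g (Z.to_nat n) else npow (inv g) (Z.to_nat (- n)).

Lemma zp_zq g n : zp g n = zq g n.
Proof.
  unfold zq. destruct n as [|p|p]; simpl.
  - reflexivity.
  - destruct (Z_le_dec 0 (Z.pos p)); [|lia]. rewrite Pos2Nat.inj_iter. reflexivity.
  - destruct (Z_le_dec 0 (Z.neg p)); [lia|]. rewrite Pos2Nat.inj_iter. reflexivity.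
Qed.

Lemma npow_succ_r g k : npow g (S k) = npow g k * g.
Proof.
  induction k; simpl. - rewrite m1g, mg1. reflexivity.
  - unfold npow in *. simpl in *. rewrite IHk, assoc, IHk. reflexivity.
Qed.

Lemma zp_succ g n : zp g (n + 1) = zp g n * g.
Proof.
  rewrite !zp_zq. unfold zq.
  destruct (Z_le_dec 0 n); destruct (Z_le_dec 0 (n+1)); try lia.
  - replace (Z.to_nat (n+1)) with (S (Z.to_nat n)) by lia. apply npow_succ_r.
  - replace (Z.to_nat (- n)) with (S (Z.to_nat (-(n+1)))) by lia.
    rewrite npow_succ_r, <- assoc, mVg, mg1.
    destruct (Z.eq_dec n (-1)). subst. simpl. reflexivity. lia.
  - replace (Z.to_nat (- n)) with (S (Z.to_nat (-(n+1)))) by lia.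
    rewrite npow_succ_r, <- assoc, mVg, mg1. reflexivity.
Qed.

Lemma zp_pred g n : zp g (n - 1) = zp g n * inv g.
Proof.
  replace n with ((n - 1) + 1) at 2 by lia. rewrite zp_succ, <- assoc, mgV, mg1. reflexivity.
Qed.

Lemma zind (P : Z -> Prop) : P 0 -> (forall n, P n -> P (n+1)) -> (forall n, P n -> P (n-1)) -> forall n, P n.
Proof. intros. apply Z.peano_ind; auto. Qed.

Lemma zp0 g : zp g 0 = one. Proof. reflexivity. Qed.
Lemma zp1 g : zp g 1 = g. Proof. simpl. apply mg1. Qed.

Lemma zp_add g m n : zp g (m + n) = zp g m * zp g n.
Proof.
  revert n. apply zind.
  - rewrite Z.add_0_r, zp0, mg1. reflexivity.
  - intros n IH. rewrite Z.add_assoc, !zp_succ, IH, assoc. reflexivity.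
  - intros n IH. replace (m + (n-1)) with ((m+n)-1) by lia. rewrite !zp_pred, IH, assoc. reflexivity.
Qed.

Lemma zp_opp g n : zp g (- n) = inv (zp g n).
Proof. apply inv_uniq. rewrite <- zp_add. replace (n + - n) with 0 by lia. reflexivity. Qed.

Lemma zp_mul g m n : zp g (m * n) = zp (zp g m) n.
Proof.
  revert n. apply zind.
  - rewrite Z.mul_0_r. reflexivity.
  - intros n IH. rewrite Z.mul_add_distr_l, Z.mul_1_r, zp_add, zp_succ, IH. reflexivity.
  - intros n IH. rewrite Z.mul_sub_distr_l, Z.mul_1_r, zp_pred.
    replace (m * n - m) with (m * n + - m) by lia. rewrite zp_add, zp_opp, IH. reflexivity.
Qed.

Lemma zp_one n : zp one n = one.
Proof.
  revert n. apply zind; intros; try rewrite zp_succ; try rewrite zp_pred; try rewrite H;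
  try rewrite inv1; rewrite ?mg1; reflexivity.
Qed.

Definition commute a b := a * b = b * a.

Lemma commute_inv a b : commute a b -> commute a (inv b).
Proof.
  unfold commute; intro H. apply (cancel_r _ _ b). rewrite <- !assoc, mVg, mg1, H, assoc, mVg, m1g. reflexivity.
Qed.

Lemma commute_zp a b n : commute a b -> commute a (zp b n).
Proof.
  intro H. revert n. apply zind; unfold commute.
  - rewrite zp0, m1g, mg1. reflexivity.
  - intros n IH. rewrite zp_succ, assoc, IH, <- !assoc, H. reflexivity.
  - intros n IH. rewrite zp_pred, assoc, IH, <- !assoc, (commute_inv _ _ H). reflexivity.
Qed.

Lemma commute_sym a b : commute a b -> commute b a.
Proof. unfold commute; auto. Qed.

Lemma commute_mul a x y : commute a x -> commute a y -> commute a (x * y).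
Proof. unfold commute; intros H1 H2. rewrite assoc, H1, <- assoc, H2, assoc. reflexivity. Qed.

Lemma zp_mulc a b n : commute a b -> zp (a * b) n = zp a n * zp b n.
Proof.
  intro H. revert n. apply zind.
  - rewrite !zp0, mg1. reflexivity.
  - intros n IH. rewrite !zp_succ, IH.
    assert (C : commute (zp b n) a) by (apply commute_sym, commute_zp, H).
    rewrite <- !assoc. f_equal. rewrite !assoc. rewrite C. reflexivity.
  - intros n IH. rewrite !zp_pred, IH, invM.
    assert (C : commute (zp b n * inv b) (inv a)).
    { apply commute_inv, commute_sym, commute_mul. apply commute_zp, H. apply commute_inv, H. }
    rewrite <- !assoc. f_equal. rewrite assoc. apply C.
Qed.

Lemma mVKg x w : inv x * (x * w) = w.
Proof. rewrite assoc, mVg, m1g. reflexivity. Qed.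

Lemma zp_conj x y n : x * zp y n * inv x = zp (x * y * inv x) n.
Proof.
  revert n. apply zind.
  - rewrite zp0, mg1, mgV. reflexivity.
  - intros n IH. rewrite !zp_succ, <- IH.
    rewrite <- !assoc, mVKg. reflexivity.
  - intros n IH. rewrite !zp_pred, <- IH, !invM, invK.
    rewrite <- !assoc, mVKg. reflexivity.
Qed.

Lemma gen_mono (P Q : G -> Prop) z : (forall x, P x -> Q x) ->
  generated mul one inv P z -> generated mul one inv Q z.
Proof. intros HPQ H. induction H; [apply gen_base; auto | apply gen_one | apply gen_mul; auto | apply gen_inv; auto]. Qed.

Lemma gen_npow P x k : generated mul one inv P x -> generated mul one inv P (npow x k).
Proof. intro H. induction k; simpl. apply gen_one. apply gen_mul; auto. Qed.

Lemma gen_zp P x n : generated mul one inv P x -> generated mul one inv P (zp x n).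
Proof. intro H. rewrite zp_zq. unfold zq. destruct (Z_le_dec 0 n); apply gen_npow; auto. apply gen_inv; auto. Qed.

Lemma gen_nil z : generated mul one inv (fun u => In u nil) z -> z = one.
Proof.
  intro H. induction H. destruct H. reflexivity. subst. apply mg1. subst. apply inv1.
Qed.

Section Ord.
Variable le : G -> G -> Prop.
Hypothesis le_refl : forall a, le a a.
Hypothesis le_anti : forall a b, le a b -> le b a -> a = b.
Hypothesis le_trans : forall a b c, le a b -> le b c -> le a c.
Hypothesis le_total : forall a b, le a b \/ le b a.
Hypothesis le_mono : forall g h x y, le g h -> le (x * (g * y)) (x * (h * y)).

Lemma le_l a b x : le a b -> le (x * a) (x * b).
Proof. intro H. pose proof (le_mono _ _ x one H). rewrite !mg1 in H0. exact H0. Qed.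
Lemma le_r a b x : le a b -> le (a * x) (b * x).
Proof. intro H. pose proof (le_mono _ _ one x H). rewrite !m1g in H0. exact H0. Qed.

Lemma npow_le a b k : le a b -> le (npow a k) (npow b k).
Proof.
  intro H. induction k. apply le_refl. change (le (a * npow a k) (b * npow b k)).
  apply le_trans with (a * npow b k). apply le_l; auto. apply le_r; auto.
Qed.

Lemma root_aux a b k : le a b -> npow a (S k) = npow b (S k) -> a = b.
Proof.
  intros H E. change (a * npow a k = b * npow b k) in E.
  apply (cancel_r _ _ (npow b k)). apply le_anti.
  - apply le_r; auto.
  - rewrite <- E. apply le_l. apply npow_le; auto.
Qed.

Lemma root_nat a b k : npow a (S k) = npow b (S k) -> a = b.
Proof.
  intro E. destruct (le_total a b). eapply root_aux; eauto. symmetry. eapply root_aux; eauto.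
Qed.

Lemma root_Z a b n : n <> 0 -> zp a n = zp b n -> a = b.
Proof.
  intros Hn E.
  assert (E' : forall n, 0 < n -> zp a n = zp b n -> a = b).
  { intros n0 Hp E0. rewrite !zp_zq in E0. unfold zq in E0. destruct (Z_le_dec 0 n0); [|lia].
    replace (Z.to_nat n0) with (S (Z.to_nat n0 - 1)) in E0 by lia. eapply root_nat; eauto. }
  destruct (Z_lt_le_dec 0 n). eauto.
  apply (E' (- n)). lia. rewrite !zp_opp, E. reflexivity.
Qed.

Lemma comm_root x y n : n <> 0 -> commute x (zp y n) -> commute x y.
Proof.
  intros Hn H.
  assert (E : x * y * inv x = y).
  { apply (root_Z _ _ n Hn). rewrite <- zp_conj. unfold commute in H. rewrite H, <- assoc, mgV, mg1. reflexivity. }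
  unfold commute. rewrite <- E at 2. rewrite <- !assoc, mVg, mg1. reflexivity.
Qed.

Lemma twogen a b m n : zp a m = zp b n -> ~ (m = 0 /\ n = 0) ->
  exists c, (exists i, a = zp c i) /\ (exists j, b = zp c j) /\ exists p q, c = zp a p * zp b q.
Proof.
  intros E Hmn.
  destruct (Z.eq_dec m 0) as [Hm0|Hm0].
  { subst. assert (b = one). { apply (root_Z _ _ n). lia. rewrite zp_one, <- E. reflexivity. }
    subst. exists a. split. exists 1. rewrite zp1; reflexivity. split. exists 0. reflexivity.
    exists 1, 0. rewrite zp1, zp0, mg1. reflexivity. }
  destruct (Z.eq_dec n 0) as [Hn0|Hn0].
  { subst. assert (a = one). { apply (root_Z _ _ m). lia. rewrite zp_one, E. reflexivity. }
    subst. exists b. split. exists 0. reflexivity. split. exists 1. rewrite zp1; reflexivity.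
    exists 0, 1. rewrite zp1, zp0, m1g. reflexivity. }
  assert (Cab : commute a b).
  { apply (comm_root _ _ n Hn0). rewrite <- E. apply commute_zp. reflexivity. }
  destruct (Z.gcd_divide_l m n) as [m' Hm].
  destruct (Z.gcd_divide_r m n) as [n' Hn].
  set (g := Z.gcd m n) in *.
  assert (Hg0 : g <> 0). { intro H0. apply Hm0. apply (Z.gcd_eq_0_l m n). exact H0. }
  destruct (Z.gcd_bezout m n g eq_refl) as [p [q Hb]].
  assert (Hpq : (p * m' + q * n' = 1)%Z).
  { assert (((p * m' + q * n' - 1) * g = 0)%Z) by (rewrite Hm, Hn in Hb; lia).
    apply Z.mul_eq_0 in H. lia. }
  assert (W : zp a m' = zp b n').
  { apply (root_Z _ _ g Hg0). rewrite <- !zp_mul, <- Hm, <- Hn. exact E. }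
  assert (C : commute (zp a q) (zp b p)).
  { apply commute_zp. apply commute_sym. apply commute_zp. apply commute_sym. exact Cab. }
  exists (zp a q * zp b p). split; [|split].
  - exists n'. rewrite zp_mulc by exact C. rewrite <- !zp_mul.
    rewrite (Z.mul_comm p n'), (zp_mul b n' p), <- W, <- zp_mul, <- zp_add.
    replace (q * n' + m' * p)%Z with 1 by lia. rewrite zp1. reflexivity.
  - exists m'. rewrite zp_mulc by exact C. rewrite <- !zp_mul.
    rewrite (Z.mul_comm q m'), (zp_mul a m' q), W, <- zp_mul, <- zp_add.
    replace (n' * q + p * m')%Z with 1 by lia. rewrite zp1. reflexivity.
  - exists q, p. reflexivity.
Qed.

Lemma main_list (U : list G) :
  (forall g h, In g U -> In h U -> commensurable mul one inv g h) ->
  exists c, forall z, generated mul one inv (fun u => In u U) z <-> exists n, z = zp c n.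
Proof.
  induction U as [|u U' IH]; intro Hcomm.
  - exists one. intro z. split.
    + intro H. apply gen_nil in H. subst. exists 0. reflexivity.
    + intros [n ->]. rewrite zp_one. apply gen_one.
  - destruct IH as [c Hc]. { intros g h Hg1 Hh1. apply Hcomm; simpl; auto. }
    assert (Hmn : exists m n, zp c m = zp u n /\ ~ (m = 0 /\ n = 0)).
    { destruct U' as [|u' U''].
      - assert (c = one). { apply gen_nil. apply Hc. exists 1. rewrite zp1. reflexivity. }
        subst. exists 1, 0. split. rewrite zp_one. reflexivity. lia.
      - destruct (proj1 (Hc u') (gen_base mul one inv (fun x => In x (u' :: U'')) u' (or_introl eq_refl))) as [k Hk].
        destruct (Hcomm u' u) as [x [y [Hx [Hy Exy]]]]; simpl; auto.
        exists (k * x)%Z, y. split. rewrite zp_mul, <- Hk. exact Exy. lia. }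
    destruct Hmn as [m [n [E Hnz]]].
    destruct (twogen c u m n E Hnz) as [c' [[i Hi] [[j Hj] [p [q Hpq]]]]].
    exists c'. intro z. split.
    + intro H. induction H.
      * destruct H as [<-|H]. exists j. exact Hj.
        destruct (proj1 (Hc u0) (gen_base mul one inv (fun x => In x U') u0 H)) as [k Hk].
        exists (i * k)%Z. rewrite Hk, Hi, zp_mul. reflexivity.
      * exists 0. reflexivity.
      * destruct IHgenerated1 as [n1 ->], IHgenerated2 as [n2 ->].
        exists (n1 + n2). rewrite zp_add. reflexivity.
      * destruct IHgenerated as [n1 ->]. exists (- n1). rewrite zp_opp. reflexivity.
    + intros [k ->]. apply gen_zp. rewrite Hpq. apply gen_mul; apply gen_zp.
      * apply gen_mono with (P := fun u0 => In u0 U'). intros; simpl; auto.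
        apply Hc. exists 1. rewrite zp1. reflexivity.
      * apply gen_base. simpl. auto.
Qed.
End Ord.
End Grp.

Theorem mainTheorem17 (G : Type) (mul : G -> G -> G) (one : G) (inv : G -> G)
  (Hgrp : is_group mul one inv) (Hord : orderable mul) (U : list G)
  (Hcomm : forall g h, In g U -> In h U -> commensurable mul one inv g h) :
  cyclic_subgroup mul one inv (generated mul one inv (fun u => In u U)).
Proof.
  destruct Hord as [le [H1 [H2 [H3 [H4 H5]]]]].
  exact (main_list G mul one inv Hgrp le H1 H2 H3 H4 H5 U Hcomm).
Qed.
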